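(* Let $C$ be a cotilting right $R$-module with torsion pair $(\mathcal Q,\mathcal C)$, and let $0\to L\xrightarrow{a}M\xrightarrow{b}N\to0$ be a short exact sequence of right $R$-modules. (1) The following are equivalent: (a) $N\in\mathcal Q$ is almost torsion-free and $b$ is a special $\mathcal C$-cover of $N$ in $\mathrm{Mod}\text{-}R$; (b) $L\in\mathrm{Prod}(C)$ and $a$ is a strong left almost split morphism in $\mathcal C$. (2) The following are equivalent: (a) $L\in\mathcal C$ is almost torsion and $a$ is a special $\mathcal C^{\perp_1}$-envelope of $L$ in $\mathrm{Mod}\text{-}R$; (b) $M\in\mathrm{Prod}(C)$ and $b$ is a strong left almost split morphism in $\mathcal C$.
   Context: $R$ is a unital associative ring, $\mathrm{Mod}\text{-}R$ right modules. $\mathrm{Prod}(C)$: direct summands of products of copies of $C$; $\mathrm{Cogen}(C)$: submodules of objects of $\mathrm{Prod}(C)$. $C$ is cotilting if $\mathrm{id}\,C\le1$, $\mathrm{Ext}^1_R(C^\kappa,C)=0$ for all cardinals $\kappa$, and there is an exact sequence $0\to C_1\to C_0\to I\to0$ with $C_i\in\mathrm{Prod}(C)$, $I$ an injective cogenerator. Then $\mathcal C=\mathrm{Cogen}(C)=\{M:\mathrm{Ext}^1_R(M,C)=0\}$ and $\mathcal Q=\{M:\mathrm{Hom}_R(M,C)=0\}$ form a torsion pair (torsion class $\mathcal Q$, torsion-free class $\mathcal C$). $\mathcal C^{\perp_1}=\{M:\mathrm{Ext}^1_R(X,M)=0\ \forall X\in\mathcal C\}$. A nonzero module $T$ is almost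 torsion-free if every proper submodule lies in $\mathcal C$ and for every short exact sequence $0\to A\to B\to T\to0$ with $B\in\mathcal Q$, $A\in\mathcal Q$. A nonzero module $F$ is almost torsion if every proper quotient lies in $\mathcal Q$ and for every short exact sequence $0\to F\to A\to B\to0$ with $A\in\mathcal C$, $B\in\mathcal C$. A special $\mathcal C$-cover of $N$ is an epimorphism $b:M\to N$ with $M\in\mathcal C$, kernel in $\mathcal C^{\perp_1}$, such that every endomorphism $g$ of $M$ with $bg=b$ is an automorphism. A special $\mathcal C^{\perp_1}$-envelope of $L$ is a monomorphism $a:L\to M$ with $M\in\mathcal C^{\perp_1}$, cokernel in $\mathcal C$, such that every endomorphism $g$ of $M$ with $ga=a$ is an automorphism. In a full subcategory $\mathcal X$, $f:X\to Y$ is left almost split if it is not a split monomorphism and every $g:X\to Z$ in $\mathcal X$ that is not a split monomorphism factors as $g=hf$; it is strong if this $h$ is always unique. *)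

(* Defs.v *)
From HB Require Import structures.
From mathcomp Require Import all_boot all_order all_algebra.
From mathcomp Require Import boolp classical_sets functions.
Set Implicit Arguments. Unset Strict Implicit. Unset Printing Implicit Defensive.
Import GRing.Theory.
Local Open Scope ring_scope.

(* Right R-modules are modelled as left modules over the converse ring R^c. *)
Section Cotilting.
Variable R : pzRingType.
Notation Mod := (lmodType R^c).

Definition ses (L M N : Mod) (a : {linear L -> M}) (b : {linear M -> N}) : Prop :=
  injective a /\ (forall n : N, exists m : M, b m = n) /\
  (forall m : M, b m = 0 <-> exists l : L, a l = m).

Definition split_mono (X Y : Mod) (f : {linear X -> Y}) : Prop :=
  exists r : {linear Y -> X}, forall x, r (f x) = x.

Definition Ext1_zero (X M : Mod) : Prop :=
  forall (E : Mod) (i : {linear M -> E}) (p : {linear E -> X}),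
    ses i p -> split_mono i.

Definition injective_mod (I : Mod) : Prop :=
  forall (A B : Mod) (i : {linear A -> B}) (f : {linear A -> I}),
    injective i -> exists g : {linear B -> I}, forall x, g (i x) = f x.

Definition cogenerator (I : Mod) : Prop :=
  forall (M : Mod) (m : M), m != 0 -> exists f : {linear M -> I}, f m != 0.

Definition inj_dim_le1 (C : Mod) : Prop :=
  exists (I0 I1 : Mod) (i : {linear C -> I0}) (p : {linear I0 -> I1}),
    ses i p /\ injective_mod I0 /\ injective_mod I1.

Definition inProd (C M : Mod) : Prop :=
  exists (X : Type) (f : {linear M -> (X -> C)}), split_mono f.

Definition inCogen (C M : Mod) : Prop :=
  exists (P : Mod) (f : {linear M -> P}), injective f /\ inProd C P.

Definition cotilting (C : Mod) : Prop :=
  inj_dim_le1 C /\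
  (forall X : Type, Ext1_zero (X -> C : Mod) C) /\
  exists (C1 C0 I : Mod) (i : {linear C1 -> C0}) (p : {linear C0 -> I}),
    ses i p /\ inProd C C1 /\ inProd C C0 /\ injective_mod I /\ cogenerator I.

Definition clC (C M : Mod) : Prop := inCogen C M.
Definition clQ (C M : Mod) : Prop := forall f : {linear M -> C}, forall x, f x = 0.

Definition clCperp (C M : Mod) : Prop := forall X : Mod, clC C X -> Ext1_zero X M.

Definition nonzero_mod (M : Mod) : Prop := exists x : M, x != 0.

(* almost torsion-free; proper submodules are given as non-surjective monos *)
Definition almost_torsion_free (C T : Mod) : Prop :=
  nonzero_mod T /\
  (forall (S : Mod) (i : {linear S -> T}),
      injective i -> ~ (forall t, exists s, i s = t) -> clC C S) /\
  (forall (A B : Mod) (f : {linear A -> B}) (g : {linear B -> T}),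
      ses f g -> clQ C B -> clQ C A).

(* almost torsion; proper quotients are given as non-injective epis *)
Definition almost_torsion (C F : Mod) : Prop :=
  nonzero_mod F /\
  (forall (P : Mod) (q : {linear F -> P}),
      (forall p, exists x, q x = p) -> ~ injective q -> clQ C P) /\
  (forall (A B : Mod) (f : {linear F -> A}) (g : {linear A -> B}),
      ses f g -> clC C A -> clC C B).

Definition automorphism (M : Mod) (g : {linear M -> M}) : Prop := bijective g.

Definition special_C_cover (C M N : Mod) (b : {linear M -> N}) : Prop :=
  (forall n, exists m, b m = n) /\ clC C M /\
  (exists (K : Mod) (k : {linear K -> M}),
      injective k /\ (forall m, b m = 0 <-> exists x, k x = m) /\ clCperp C K) /\
  (forall g : {linear M -> M}, (forall m, b (g m) = b m) -> automorphism g).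

Definition special_Cperp_envelope (C L M : Mod) (a : {linear L -> M}) : Prop :=
  injective a /\ clCperp C M /\
  (exists (P : Mod) (c : {linear M -> P}),
      (forall p, exists m, c m = p) /\ (forall m, c m = 0 <-> exists l, a l = m)
      /\ clC C P) /\
  (forall g : {linear M -> M}, (forall l, g (a l) = a l) -> automorphism g).

Definition strong_left_almost_split (cl : Mod -> Prop) (X Y : Mod)
    (f : {linear X -> Y}) : Prop :=
  cl X /\ cl Y /\ ~ split_mono f /\
  forall (Z : Mod) (g : {linear X -> Z}), cl Z -> ~ split_mono g ->
    exists h : {linear Y -> Z},
      (forall x, g x = h (f x)) /\
      (forall h' : {linear Y -> Z}, (forall x, g x = h' (f x)) -> forall y, h' y = h y).

End Cotilting.

(* Main.v *)
Require Import Defs.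
From HB Require Import structures.
From mathcomp Require Import all_boot all_order all_algebra.
From mathcomp Require Import boolp classical_sets functions.
Set Implicit Arguments. Unset Strict Implicit. Unset Printing Implicit Defensive.
Import GRing.Theory.
Local Open Scope ring_scope.


Section SubQ.
Variable R : pzRingType.
Local Notation Mod := (lmodType R^c).

Definition submod (V : Mod) (P : V -> Prop) :=
  P 0 /\ (forall x y, P x -> P y -> P (x + y)) /\ (forall k x, P x -> P (k *: x)).

Section SubT.
Variables (V : Mod) (P : V -> Prop) (hP : submod P).
Definition SubT := {x : V | P x}.
Let P0 : P 0. Proof. by case: hP. Qed.
Let PD x y : P x -> P y -> P (x + y). Proof. by case: hP => _ [h _]; apply: h. Qed.
Let PZ k x : P x -> P (k *: x). Proof. by case: hP => _ [_ h]; apply: h. Qed.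
Let PN x : P x -> P (- x). Proof. by move=> /(PZ (-1)); rewrite scaleN1r. Qed.
Definition szero : SubT := exist _ 0 P0.
Definition sadd (x y : SubT) : SubT := exist _ (sval x + sval y) (PD (svalP x) (svalP y)).
Definition sopp (x : SubT) : SubT := exist _ (- sval x) (PN (svalP x)).
Definition sscale k (x : SubT) : SubT := exist _ (k *: sval x) (PZ k (svalP x)).
Lemma sval_inj' : injective (@sval V P).
Proof. move=> [x hx] [y hy] /= e; subst y; congr exist; exact: Prop_irrelevance. Qed.
Let saddA : associative sadd.
Proof. by move=> x y z; apply: sval_inj'; rewrite /= addrA. Qed.
Let saddC : commutative sadd.
Proof. by move=> x y; apply: sval_inj'; rewrite /= addrC. Qed.
Let sadd0 : left_id szero sadd.
Proof. by move=> x; apply: sval_inj'; rewrite /= add0r. Qed.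
Let saddN : left_inverse szero sopp sadd.
Proof. by move=> x; apply: sval_inj'; rewrite /= addNr. Qed.
HB.instance Definition _ := gen_eqMixin SubT.
HB.instance Definition _ := gen_choiceMixin SubT.
HB.instance Definition _ := GRing.isZmodule.Build SubT saddA saddC sadd0 saddN.
Let sscaleA a b v : sscale a (sscale b v) = sscale (a * b) v.
Proof. by apply: sval_inj'; rewrite /= scalerA. Qed.
Let sscale1 : left_id 1 sscale.
Proof. by move=> x; apply: sval_inj'; rewrite /= scale1r. Qed.
Let sscaleDr : right_distributive sscale +%R.
Proof. by move=> k x y; apply: sval_inj'; rewrite /= scalerDr. Qed.
Let sscaleDl v : {morph sscale^~ v: a b / a + b}.
Proof. by move=> x y; apply: sval_inj'; rewrite /= scalerDl. Qed.
HB.instance Definition _ := GRing.Zmodule_isLmodule.Build R^c SubT sscaleA sscale1 sscaleDr sscaleDl.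
Definition SubM : Mod := SubT.
End SubT.

Section QuotT.
Variables (V : Mod) (P : V -> Prop) (hP : submod P).
Let P0 : P 0. Proof. by case: hP. Qed.
Let PD x y : P x -> P y -> P (x + y). Proof. by case: hP => _ [h _]; apply: h. Qed.
Let PZ k x : P x -> P (k *: x). Proof. by case: hP => _ [_ h]; apply: h. Qed.
Let PN x : P x -> P (- x). Proof. by move=> /(PZ (-1)); rewrite scaleN1r. Qed.
Let PB x y : P x -> P y -> P (x - y). Proof. by move=> hx hy; apply: PD => //; exact: PN. Qed.
Definition coset (v : V) : V -> Prop := fun x => P (x - v).
Definition QT := {A : V -> Prop | exists v, A = coset v}.
Definition qproj (v : V) : QT := exist _ (coset v) (ex_intro _ v erefl).
Definition rep (A : QT) : V := sval (cid (svalP A)).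
Lemma qval_inj : injective (@sval (V -> Prop) (fun A => exists v, A = coset v)).
Proof. move=> [x hx] [y hy] /= e; subst y; congr exist; exact: Prop_irrelevance. Qed.
Lemma qproj_eq v w : qproj v = qproj w <-> P (v - w).
Proof.
split.
  move=> /(congr1 sval) /= /(congr1 (fun A => A v)); rewrite /coset subrr => <-.
  exact: P0.
move=> h; apply: qval_inj; rewrite /=; apply/funext => x; apply/propext; rewrite /coset.
split => hx.
  by have := PD hx h; rewrite addrA subrK.
have := PB hx h; rewrite opprB addrA subrK //.
Qed.
Lemma repK A : qproj (rep A) = A.
Proof.
rewrite /rep; case: (cid (svalP A)) => v /= e.
by apply: qval_inj; rewrite /= -e.
Qed.
Lemma qsurj A : exists v, A = qproj v.
Proof. by exists (rep A); rewrite repK. Qed.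
Lemma rep_proj v : P (rep (qproj v) - v).
Proof. by apply/qproj_eq; rewrite repK. Qed.
Definition qzero := qproj 0.
Definition qadd A B := qproj (rep A + rep B).
Definition qopp A := qproj (- rep A).
Definition qscale k A := qproj (k *: rep A).
Lemma qprojD v w : qproj (v + w) = qadd (qproj v) (qproj w).
Proof.
apply/qproj_eq.
suff -> : v + w - (rep (qproj v) + rep (qproj w)) = - ((rep (qproj v) - v) + (rep (qproj w) - w)).
  by apply/PN/PD; apply: rep_proj.
by rewrite opprD addrACA [RHS]opprD !opprB.
Qed.
Lemma qprojN v : qproj (- v) = qopp (qproj v).
Proof. apply/qproj_eq.
suff -> : - v - - rep (qproj v) = rep (qproj v) - v by apply: rep_proj.
by rewrite opprK addrC. Qed.
Lemma qprojZ k v : qproj (k *: v) = qscale k (qproj v).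
Proof. apply/qproj_eq.
suff -> : k *: v - k *: rep (qproj v) = - (k *: (rep (qproj v) - v)) by apply/PN/PZ/rep_proj.
by rewrite scalerBr opprB. Qed.
Let qaddA : associative qadd.
Proof. move=> A B D; case: (qsurj A) => a ->; case: (qsurj B) => b ->; case: (qsurj D) => d ->.
by rewrite -!qprojD addrA. Qed.
Let qaddC : commutative qadd.
Proof. move=> A B; case: (qsurj A) => a ->; case: (qsurj B) => b ->.
by rewrite -!qprojD addrC. Qed.
Let qadd0 : left_id qzero qadd.
Proof. move=> A; case: (qsurj A) => a ->. by rewrite /qzero -!qprojD add0r. Qed.
Let qaddN : left_inverse qzero qopp qadd.
Proof. move=> A; case: (qsurj A) => a ->. by rewrite -qprojN -!qprojD addNr. Qed.
HB.instance Definition _ := gen_eqMixin QT.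
HB.instance Definition _ := gen_choiceMixin QT.
HB.instance Definition _ := GRing.isZmodule.Build QT qaddA qaddC qadd0 qaddN.
Lemma qprojD' v w : qproj (v + w) = qproj v + qproj w :> QT.
Proof. exact: qprojD. Qed.
Let qscaleA a b v : qscale a (qscale b v) = qscale (a * b) v.
Proof. case: (qsurj v) => x ->. by rewrite -!qprojZ scalerA. Qed.
Let qscale1 : left_id 1 qscale.
Proof. move=> A; case: (qsurj A) => x ->. by rewrite -!qprojZ scale1r. Qed.
Let qscaleDr : right_distributive qscale +%R.
Proof. move=> k A B; case: (qsurj A) => x ->; case: (qsurj B) => y ->.
by rewrite -qprojD' -!qprojZ -qprojD' scalerDr. Qed.
Let qscaleDl v : {morph qscale^~ v: a b / a + b}.
Proof. move=> x y; case: (qsurj v) => w ->. 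
by rewrite -!qprojZ -qprojD' scalerDl. Qed.
HB.instance Definition _ := GRing.Zmodule_isLmodule.Build R^c QT qscaleA qscale1 qscaleDr qscaleDl.
Definition QM : Mod := QT.
End QuotT.

End SubQ.

Section Iface.
Variable R : pzRingType.
Local Notation Mod := (lmodType R^c).

Definition mkLin (A B : Mod) (f : A -> B) (hf : linear f) : {linear A -> B} :=
  HB.pack f (GRing.isLinear.Build _ _ _ _ f hf).
Lemma mkLinE (A B : Mod) (f : A -> B) (hf : linear f) x : mkLin hf x = f x.
Proof. by []. Qed.

Lemma sub_exists (V : Mod) (P : V -> Prop) : submod P ->
  exists (S : Mod) (j : {linear S -> V}), injective j /\ forall v, P v <-> exists s, j s = v.
Proof.
move=> hP.
have hl : linear (@sval V P : SubM hP -> V) by [].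
exists (SubM hP), (mkLin hl); split.
  by move=> x y /= e; apply: sval_inj'.
move=> v; split => [pv | [s <-]]; first by exists (exist _ v pv).
exact: svalP.
Qed.

Lemma coker_exists (A B : Mod) (f : {linear A -> B}) :
  exists (Q : Mod) (q : {linear B -> Q}),
    (forall y, exists x, q x = y) /\ (forall x, q x = 0 <-> exists a, f a = x).
Proof.
pose P := fun x : B => exists a, f a = x.
have hP : submod P.
  split; first by exists 0; rewrite linear0.
  split; first by move=> x y [a <-] [b <-]; exists (a + b); rewrite linearD.
  by move=> k x [a <-]; exists (k *: a); rewrite linearZ.
have hl : linear (@qproj _ _ P : B -> QM hP).
  move=> k u v; rewrite (qprojD' hP); congr (_ + _).
  exact: (qprojZ hP).
exists (QM hP), (mkLin hl); split.
  by move=> y; case: (qsurj y) => v ->; exists v.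
move=> x; rewrite mkLinE; split.
  by move/(qproj_eq hP); rewrite subr0.
by move=> hx; apply/(qproj_eq hP); rewrite subr0.
Qed.
End Iface.


Section Gen.
Variable R : pzRingType.
Local Notation Mod := (lmodType R^c).

Lemma pair_eq (A B : Mod) (u v : (A * B)%type) : u.1 = v.1 -> u.2 = v.2 -> u = v.
Proof. by case: u => ? ?; case: v => ? ? /= -> ->. Qed.
Lemma fstD (A B : Mod) (u v : (A * B)%type) : (u + v).1 = u.1 + v.1. Proof. by []. Qed.
Lemma sndD (A B : Mod) (u v : (A * B)%type) : (u + v).2 = u.2 + v.2. Proof. by []. Qed.
Lemma fstZ (A B : Mod) k (u : (A * B)%type) : (k *: u).1 = k *: u.1. Proof. by []. Qed.
Lemma sndZ (A B : Mod) k (u : (A * B)%type) : (k *: u).2 = k *: u.2. Proof. by []. Qed.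
Lemma fst0 (A B : Mod) : (0 : (A * B)%type).1 = 0. Proof. by []. Qed.
Lemma snd0 (A B : Mod) : (0 : (A * B)%type).2 = 0. Proof. by []. Qed.
Lemma fstN (A B : Mod) (u : (A * B)%type) : (- u).1 = - u.1. Proof. by []. Qed.
Lemma sndN (A B : Mod) (u : (A * B)%type) : (- u).2 = - u.2. Proof. by []. Qed.
Definition pairE := (fstD, sndD, fstZ, sndZ, fst0, snd0, fstN, sndN).

Lemma lzero_lin (A B : Mod) : linear (fun _ : A => (0 : B)).
Proof. by move=> k x y; rewrite scaler0 addr0. Qed.
Definition lzero (A B : Mod) : {linear A -> B} := mkLin (@lzero_lin A B).
Lemma lzeroE (A B : Mod) x : lzero A B x = 0. Proof. by []. Qed.

Lemma ses_comp0 (K E Z : Mod) (i : {linear K -> E}) (p : {linear E -> Z}) :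
  ses i p -> forall k, p (i k) = 0.
Proof. by move=> [_ [_ h]] k; apply/h; exists k. Qed.

Lemma ses_inj0 (K E Z : Mod) (i : {linear K -> E}) (p : {linear E -> Z}) :
  ses i p -> forall k, i k = 0 -> k = 0.
Proof. by move=> [ii _] k hk; apply: ii; rewrite hk linear0. Qed.

Lemma inj0 (A B : Mod) (f : {linear A -> B}) : injective f -> forall x, f x = 0 -> x = 0.
Proof. by move=> fi x hx; apply: fi; rewrite hx linear0. Qed.

Lemma lin_eq (A B : Mod) (f : {linear A -> B}) x y : f (x - y) = 0 -> f x = f y.
Proof. by rewrite linearB => /eqP; rewrite subr_eq0 => /eqP. Qed.

Lemma descend (E Z Y : Mod) (p : {linear E -> Z}) (phi : {linear E -> Y}) :
  (forall z, exists e, p e = z) -> (forall e, p e = 0 -> phi e = 0) ->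
  exists psi : {linear Z -> Y}, forall e, psi (p e) = phi e.
Proof.
move=> hs h0.
pose s z := sval (cid (hs z)).
have hps z : p (s z) = z by rewrite /s; case: cid.
have hw e e' : p e = p e' -> phi e = phi e'.
  by move=> he; apply: lin_eq; apply: h0; rewrite linearB he subrr.
have hl : linear (fun z => phi (s z)).
  by move=> k u v /=; rewrite -linearP; apply: hw; rewrite linearP !hps.
by exists (mkLin hl) => e /=; apply: hw; rewrite hps.
Qed.

Lemma factor_inj (X L M : Mod) (a : {linear L -> M}) (phi : {linear X -> M}) :
  injective a -> (forall x, exists l, a l = phi x) ->
  exists psi : {linear X -> L}, forall x, a (psi x) = phi x.
Proof.
move=> ia h; pose s x := sval (cid (h x)).
have hs x : a (s x) = phi x by rewrite /s; case: cid.
have hl : linear s by move=> k u v /=; apply: ia; rewrite linearP !hs linearP.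
by exists (mkLin hl).
Qed.

Lemma split_sec (K E Z : Mod) (i : {linear K -> E}) (p : {linear E -> Z})
  (r : {linear E -> K}) : ses i p -> (forall k, r (i k) = k) ->
  exists s : {linear Z -> E}, (forall z, p (s z) = z) /\ forall e, e = i (r e) + s (p e).
Proof.
move=> hs hr; case: (hs) => ii [ps ker].
have hl : linear (fun e => e - i (r e)).
  by move=> k u v /=; rewrite (linearP r) (linearP i) scalerBr opprD addrACA.
case: (descend (p:=p) (phi:=mkLin hl) ps _) => [e /ker [k <-] | s hsd].
  by rewrite /= hr subrr.
exists s; split.
  by move=> z; case: (ps z) => e <-; rewrite hsd /= linearB (ses_comp0 hs) subr0.
by move=> e; rewrite hsd /= addrC subrK.
Qed.

Lemma sec_split (K E Z : Mod) (i : {linear K -> E}) (p : {linear E -> Z})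
  (s : {linear Z -> E}) : ses i p -> (forall z, p (s z) = z) -> split_mono i.
Proof.
move=> hs hps; case: (hs) => ii [ps ker].
have hl : linear (fun e => e - s (p e)).
  by move=> k u v /=; rewrite (linearP p) (linearP s) scalerBr opprD addrACA.
case: (factor_inj (a:=i) (phi:=mkLin hl) ii _) => [e | r hr].
  by apply/ker; rewrite /= linearB hps subrr.
by exists r => k; apply: ii; rewrite hr /= (ses_comp0 hs) linear0 subr0.
Qed.

Lemma lift_ext (X K E Y : Mod) (i : {linear K -> E}) (p : {linear E -> Y})
  (phi : {linear X -> Y}) :
  Ext1_zero X K -> ses i p -> exists psi : {linear X -> E}, forall x, p (psi x) = phi x.
Proof.
move=> hX hs; case: (hs) => ii [ps ker].
pose P := fun v : (X * E)%type => phi v.1 = p v.2.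
have hP : submod P.
  split; first by rewrite /P ?pairE !linear0.
  split; first by move=> x y; rewrite /P ?pairE !linearD => -> ->.
  by move=> k x; rewrite /P ?pairE !linearZ => ->.
case: (sub_exists hP) => S [j [ij hj]].
have hjP s : P (j s) by apply/hj; exists s.
have hl0 : linear (fun k => ((0 : X), i k) : (X * E)%type).
  by move=> k u v /=; apply: pair_eq; rewrite ?pairE /= ?linearP ?scaler0 ?addr0.
case: (factor_inj (a:=j) (phi:=mkLin hl0) ij _) => [k | io hio].
  by apply/hj; rewrite /P /= linear0 (ses_comp0 hs).
have hl1 : linear (fun s => (j s).1).
  by move=> k u v /=; rewrite linearP ?pairE.
pose pi := mkLin hl1.
have hses : ses io pi.
  split; first by move=> k k' e; apply: ii; have := congr1 (fun s => (j s).2) e; rewrite /= !hio.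
  split.
    move=> x; case: (ps (phi x)) => e he.
    have : P ((x, e) : (X * E)%type) by rewrite /P /= he.
    by move/hj => [s hs']; exists s; rewrite /= hs'.
  move=> s; split.
    rewrite /= => h1; have := hjP s; rewrite /P h1 linear0 => /esym /ker [k hk].
    exists k; apply: ij; rewrite hio; apply: pair_eq => //=.
  by move=> [k <-]; rewrite /= hio.
case: (hX _ _ _ hses) => r hr.
case: (split_sec hses hr) => sg [hsg _].
have hl2 : linear (fun x => (j (sg x)).2).
  by move=> k u v /=; rewrite !linearP.
exists (mkLin hl2) => x /=; have := hjP (sg x); rewrite /P => <-.
by have := hsg x; rewrite /= => ->.
Qed.

Lemma pushout (A E Z K : Mod) (i : {linear A -> E}) (p : {linear E -> Z})
  (u : {linear A -> K}) : ses i p ->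
  exists (E' : Mod) (i' : {linear K -> E'}) (p' : {linear E' -> Z}) (eps : {linear E -> E'}),
   [/\ ses i' p', (forall a, eps (i a) = i' (u a)), (forall e, p' (eps e) = p e),
       (forall e', exists k e, e' = i' k + eps e) &
       (forall (W : Mod) (be : {linear K -> W}) (ga : {linear E -> W}),
          (forall a, be (u a) = ga (i a)) ->
          exists th : {linear E' -> W}, (forall k, th (i' k) = be k) /\ forall e, th (eps e) = ga e)].
Proof.
move=> hs; case: (hs) => ii [ps ker].
have hlf : linear (fun a => (u a, - i a) : (K * E)%type).
  by move=> k x y /=; apply: pair_eq; rewrite ?pairE /= !linearP // opprD scalerN.
case: (coker_exists (mkLin hlf)) => Q [q [qs qk]].
have hl1 : linear (fun k => q ((k, 0) : (K * E)%type)).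
  move=> k x y /=; rewrite -linearP; congr (q _); apply: pair_eq; rewrite ?pairE //=.
  by rewrite scaler0 addr0.
have hl2 : linear (fun e => q ((0, e) : (K * E)%type)).
  move=> k x y /=; rewrite -linearP; congr (q _); apply: pair_eq; rewrite ?pairE //=.
  by rewrite scaler0 addr0.
pose i' := mkLin hl1; pose eps := mkLin hl2.
have gen e' : exists k e, e' = i' k + eps e.
  case: (qs e') => v <-; exists v.1, v.2; rewrite /= -linearD; congr (q _).
  by apply: pair_eq; rewrite ?pairE /= ?addr0 ?add0r.
have univ (W : Mod) (be : {linear K -> W}) (ga : {linear E -> W}) :
    (forall a, be (u a) = ga (i a)) ->
    exists th : {linear Q -> W}, (forall k, th (i' k) = be k) /\ forall e, th (eps e) = ga e.
  move=> hbg.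
  have hl3 : linear (fun v : (K * E)%type => be v.1 + ga v.2).
    by move=> k x y /=; rewrite !linearP scalerDr addrACA.
  case: (descend (p:=q) (phi:=mkLin hl3) qs _) => [v /qk [a <-] | th hth].
    by rewrite /= linearN hbg subrr.
  exists th; split => [k | e]; rewrite /= hth /= ?linear0 ?addr0 ?add0r //.
have heps a : eps (i a) = i' (u a).
  change (q ((0, i a) : (K * E)%type) = q ((u a, 0) : (K * E)%type)).
  apply: lin_eq; apply/qk; exists (- a).
  by apply: pair_eq; rewrite ?pairE /= !linearN ?opprK ?sub0r ?subr0.
have hp0 a : lzero K Z (u a) = p (i a) by rewrite (ses_comp0 hs).
case: (univ _ _ _ hp0) => p' [hp'1 hp'2].
exists Q, i', p', eps; split => //.
split.
  move=> k k' e; apply/eqP; rewrite -subr_eq0; apply/eqP.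
  have : q ((k - k', 0) : (K * E)%type) = 0.
    have -> : ((k - k', 0) : (K * E)%type) = (k, 0) - (k', 0) by apply: pair_eq; rewrite /= ?subr0.
    by rewrite linearB; apply/eqP; rewrite subr_eq0; apply/eqP; exact: e.
  move/qk => [a ha].
  have ha2 := congr1 snd ha; have ha1 := congr1 fst ha; rewrite /= in ha1 ha2.
  have ia0 : i a = 0 by apply/eqP; rewrite -oppr_eq0 ha2.
  by rewrite -ha1 (ses_inj0 hs ia0) linear0.
split.
  by move=> z; case: (ps z) => e <-; exists (eps e).
move=> e'; split.
  case: (gen e') => k [e ->]; rewrite linearD hp'1 hp'2 /= add0r => /ker [a <-].
  by exists (k + u a); change (i' (k + u a) = i' k + eps (i a)); rewrite heps linearD.
by move=> [k <-]; rewrite hp'1.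
Qed.

End Gen.


Section Gen2.
Variable R : pzRingType.
Local Notation Mod := (lmodType R^c).

Lemma lid_lin (A : Mod) : linear (fun x : A => x). Proof. by []. Qed.
Definition lid (A : Mod) : {linear A -> A} := mkLin (@lid_lin A).
Lemma lcomp_lin (A B D : Mod) (f : {linear B -> D}) (g : {linear A -> B}) :
  linear (fun x => f (g x)).
Proof. by move=> k x y /=; rewrite !linearP. Qed.
Definition lcomp (A B D : Mod) (f : {linear B -> D}) (g : {linear A -> B}) : {linear A -> D} :=
  mkLin (lcomp_lin f g).
Lemma ladd_lin (A B : Mod) (f g : {linear A -> B}) : linear (fun x => f x + g x).
Proof. by move=> k x y /=; rewrite (linearP f) (linearP g) scalerDr addrACA. Qed.
Definition ladd (A B : Mod) (f g : {linear A -> B}) : {linear A -> B} := mkLin (ladd_lin f g).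
Lemma lsub_lin (A B : Mod) (f g : {linear A -> B}) : linear (fun x => f x - g x).
Proof. by move=> k x y /=; rewrite (linearP f) (linearP g) scalerBr opprD addrACA. Qed.
Definition lsub (A B : Mod) (f g : {linear A -> B}) : {linear A -> B} := mkLin (lsub_lin f g).
Lemma lopp_lin (A B : Mod) (f : {linear A -> B}) : linear (fun x => - f x).
Proof. by move=> k x y /=; rewrite (linearP f) opprD scalerN. Qed.
Definition lopp (A B : Mod) (f : {linear A -> B}) : {linear A -> B} := mkLin (lopp_lin f).

Lemma image_exists (A B : Mod) (u : {linear A -> B}) :
  exists (U : Mod) (jU : {linear U -> B}) (ub : {linear A -> U}),
    [/\ injective jU, (forall x, jU (ub x) = u x), (forall y, exists x, ub x = y) &
        (forall y, jU y = 0 -> y = 0)].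
Proof.
pose P := fun b : B => exists x, u x = b.
have hP : submod P.
  split; first by exists 0; rewrite linear0.
  split; first by move=> x y [a <-] [b <-]; exists (a + b); rewrite linearD.
  by move=> k x [a <-]; exists (k *: a); rewrite linearZ.
case: (sub_exists hP) => U [jU [ij hj]].
case: (factor_inj (a:=jU) (phi:=u) ij _) => [x | ub hub].
  by apply/hj; exists x.
exists U, jU, ub; split => //.
  move=> y; have : P (jU y) by apply/hj; exists y.
  by case=> x hx; exists x; apply: ij; rewrite hub.
exact: inj0.
Qed.

Lemma kernel_exists (A B : Mod) (u : {linear A -> B}) :
  exists (K : Mod) (jK : {linear K -> A}), injective jK /\ forall x, u x = 0 <-> exists k, jK k = x.
Proof.
pose P := fun x : A => u x = 0.
have hP : submod P.
  split; first by rewrite /P linear0.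
  split; first by move=> x y; rewrite /P linearD => -> ->; rewrite addr0.
  by move=> k x; rewrite /P => hx; rewrite -[k *: x]addr0 linearP hx linear0 scaler0 addr0.
case: (sub_exists hP) => K [jK [ij hj]].
by exists K, jK; split.
Qed.

Lemma pullback (A B N : Mod) (f : {linear A -> N}) (g : {linear B -> N}) :
  exists (P : Mod) (p1 : {linear P -> A}) (p2 : {linear P -> B}),
    [/\ (forall x, f (p1 x) = g (p2 x)), (forall x y, p1 x = p1 y -> p2 x = p2 y -> x = y),
      (forall a b, f a = g b -> exists x, p1 x = a /\ p2 x = b) &
      (forall (X : Mod) (al : {linear X -> A}) (be : {linear X -> B}), (forall x, f (al x) = g (be x)) ->
         exists ch : {linear X -> P}, forall x, p1 (ch x) = al x /\ p2 (ch x) = be x)].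
Proof.
pose P := fun v : (A * B)%type => f v.1 = g v.2.
have hP : submod P.
  split; first by rewrite /P !linear0.
  split; first by move=> x y; rewrite /P /= !linearD => -> ->.
  by move=> k x; rewrite /P /= !linearZ => ->.
case: (sub_exists hP) => S [j [ij hj]].
have hjP s : P (j s) by apply/hj; exists s.
have hl1 : linear (fun s => (j s).1) by move=> k u v /=; rewrite !linearP.
have hl2 : linear (fun s => (j s).2) by move=> k u v /=; rewrite !linearP.
exists S, (mkLin hl1), (mkLin hl2); split.
- by move=> x; exact: hjP.
- move=> x y e1 e2; apply: ij; apply: pair_eq; [exact: e1 | exact: e2].
- move=> a0 b0 hab; have : P ((a0, b0) : (A * B)%type) by [].
  by move/hj => [s hs]; exists s; rewrite /= hs.
move=> X al be hab.
have hl3 : linear (fun x => (al x, be x) : (A * B)%type).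
  by move=> k u v /=; apply: pair_eq; rewrite /= !linearP.
case: (factor_inj (a:=j) (phi:=mkLin hl3) ij _) => [x | ch hch].
  by apply/hj; rewrite /P /= hab.
by exists ch => x; rewrite /= hch.
Qed.

Lemma ext_of_lift (Z K J0 J1 : Mod) (j : {linear K -> J0}) (q : {linear J0 -> J1}) :
  injective j -> (forall y, q y = 0 <-> exists k, j k = y) -> injective_mod J0 ->
  (forall phi : {linear Z -> J1}, exists psi : {linear Z -> J0}, forall z, q (psi z) = phi z) ->
  Ext1_zero Z K.
Proof.
move=> ij hq hJ hlift E i p hs; case: (hs) => ii [ps ker].
case: (hJ _ _ i j ii) => al hal.
case: (descend (p:=p) (phi:=lcomp q al) ps _) => [e /ker [k <-] | ph hph].
  by rewrite /lcomp /= hal; apply/hq; exists k.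
case: (hlift ph) => ps' hps.
case: (factor_inj (a:=j) (phi:=lsub al (lcomp ps' p)) ij _) => [e | r hr].
  by apply/hq; rewrite /lsub /lcomp /= linearB hps hph /= subrr.
exists r => k; apply: ij; rewrite hr /lsub /lcomp /= hal (ses_comp0 hs) linear0 subr0 //.
Qed.

Lemma ext_extend (X K A Z : Mod) (u : {linear A -> Z}) (c : {linear Z -> X})
  (a : {linear A -> K}) : Ext1_zero X K -> ses u c ->
  exists rho : {linear Z -> K}, forall x, rho (u x) = a x.
Proof.
move=> hX hs.
case: (pushout a hs) => E' [i' [p' [eps [hs' he _ _ _]]]].
case: (hX _ _ _ hs') => r hr.
by exists (lcomp r eps) => x; rewrite /lcomp /= he hr.
Qed.

Lemma ext_retract (Z K K' : Mod) (s : {linear K -> K'}) (r : {linear K' -> K}) :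
  (forall k, r (s k) = k) -> Ext1_zero Z K' -> Ext1_zero Z K.
Proof.
move=> hrs hZ E i p hs.
case: (ext_extend s hZ hs) => rho hrho.
by exists (lcomp r rho) => k; rewrite /lcomp /= hrho hrs.
Qed.

Lemma prod_inj (Y : Type) (J : Mod) : injective_mod J -> injective_mod (Y -> J : Mod).
Proof.
move=> hJ A B i f ii.
have h1 y : exists g : {linear B -> J}, forall x, g (i x) = f x y.
  have hl : linear (fun x => f x y) by move=> k u v /=; rewrite linearP.
  by case: (hJ _ _ i (mkLin hl) ii) => g hg; exists g.
case: (choice h1) => G hG.
have hl : linear (fun b => (fun y => G y b) : Y -> J).
  by move=> k u v /=; apply/funext => y /=; rewrite linearP.
exists (mkLin hl) => x /=; apply/funext => y; exact: hG.
Qed.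

End Gen2.


Section Basic.
Variable R : pzRingType.
Local Notation Mod := (lmodType R^c).
Variable C : Mod.

Lemma split_inj (X Y : Mod) (f : {linear X -> Y}) : split_mono f -> injective f.
Proof. by case=> r hr x y e; rewrite -(hr x) -(hr y) e. Qed.

Lemma clC_sub (X Y : Mod) (f : {linear X -> Y}) : injective f -> clC C Y -> clC C X.
Proof.
move=> fi [P [g [ig hP]]]; exists P, (lcomp g f); split => //.
by move=> x y /= e; apply: fi; apply: ig.
Qed.

Lemma clC_Prod (X : Mod) : inProd C X -> clC C X.
Proof. by move=> h; exists X, (lid X); split. Qed.

Lemma inProd_C : inProd C C.
Proof.
have hl : linear (fun c : C => (fun _ : unit => c) : unit -> C).
  by move=> k x y /=; apply/funext.
have hr : linear (fun v : (unit -> C) => v tt) by [].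
by exists unit, (mkLin hl), (mkLin hr).
Qed.

Lemma clC_C : clC C C.
Proof. exact: clC_Prod inProd_C. Qed.

Lemma inProd_prod (X : Type) : inProd C (X -> C).
Proof. by exists X, (lid _), (lid _). Qed.

Lemma sep_clC (X : Mod) :
  (forall x : X, x != 0 -> exists phi : {linear X -> C}, phi x != 0) -> clC C X.
Proof.
move=> h.
have h' (x : X) : exists phi : {linear X -> C}, x != 0 -> phi x != 0.
  case: (eqVneq x 0) => [_ | nx]; first by exists (lzero X C).
  by case: (h x nx) => phi hp; exists phi.
case: (choice h') => F hF.
have hl : linear (fun x => (fun y => F y x) : X -> C).
  by move=> k u v /=; apply/funext => y /=; rewrite linearP.
exists (X -> C), (mkLin hl); split; last exact: inProd_prod.
move=> x x' e; apply/eqP; rewrite -subr_eq0; apply/negPn/negP => hn.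
have := hF _ hn; rewrite linearB.
have := congr1 (fun h => h (x - x')) e; rewrite /= => ->.
by rewrite subrr eqxx.
Qed.

Lemma clC_sep (X : Mod) : clC C X -> forall x : X, x != 0 ->
  exists phi : {linear X -> C}, phi x != 0.
Proof.
move=> [P [g [ig [Y [s [r hr]]]]]] x hx.
case: (pselect (exists y, s (g x) y != 0)) => [[y hy] | hn].
  have hl : linear (fun x => s (g x) y) by move=> k u v /=; rewrite !linearP.
  by exists (mkLin hl).
have : s (g x) = 0.
  apply/funext => y; apply/eqP; apply/negPn/negP => h; apply: hn; by exists y.
move=> e; have : g x = 0 by rewrite -(hr (g x)) e linear0.
by move/(inj0 ig) => x0; rewrite x0 eqxx in hx.
Qed.

Lemma QC_zero (N Z : Mod) (sg : {linear N -> Z}) : clQ C N -> clC C Z -> forall n, sg n = 0.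
Proof.
move=> hQ hZ n; apply/eqP; apply/negPn/negP => hn.
case: (clC_sep hZ hn) => phi hp.
by move: hp; have := hQ (lcomp phi sg) n; rewrite /= => ->; rewrite eqxx.
Qed.

Lemma QC_triv (X : Mod) : clQ C X -> clC C X -> forall x : X, x = 0.
Proof. by move=> hQ hC x; exact: (QC_zero (lid X) hQ hC x). Qed.

Lemma Q_quot (X Y : Mod) (q : {linear X -> Y}) : (forall y, exists x, q x = y) ->
  clQ C X -> clQ C Y.
Proof. by move=> qs hQ f y; case: (qs y) => x <-; exact: (hQ (lcomp f q)). Qed.

End Basic.

Section Cot.
Variable R : pzRingType.
Local Notation Mod := (lmodType R^c).
Variables (C I0 I1 : Mod) (i0 : {linear C -> I0}) (p0 : {linear I0 -> I1}).
Hypotheses (hs0 : ses i0 p0) (hI0 : injective_mod I0) (hI1 : injective_mod I1)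
  (hExt : forall X : Type, Ext1_zero (X -> C : Mod) C).
Variables (C1 C0 I : Mod) (j1 : {linear C1 -> C0}) (pi1 : {linear C0 -> I}).
Hypotheses (hs1 : ses j1 pi1) (hC1 : inProd C C1) (hC0 : inProd C C0) (hcog : cogenerator I).

Definition LP (Z : Mod) := forall phi : {linear Z -> I1},
  exists psi : {linear Z -> I0}, forall z, p0 (psi z) = phi z.

Lemma ext_LP (Z : Mod) : Ext1_zero Z C -> LP Z.
Proof. by move=> h phi; exact: (lift_ext (i:=i0) (p:=p0) phi h hs0). Qed.

Lemma LP_ext (Z : Mod) : LP Z -> Ext1_zero Z C.
Proof.
move=> h; case: (hs0) => ii [_ ker].
exact: (ext_of_lift (j:=i0) (q:=p0) ii ker hI0 h).
Qed.

Lemma LP_inj (Z W : Mod) (f : {linear Z -> W}) : injective f -> LP W -> LP Z.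
Proof.
move=> fi hW phi; case: (@hI1 _ _ f phi fi) => phi' hphi'.
case: (hW phi') => psi hpsi.
by exists (lcomp psi f) => z; rewrite /= hpsi hphi'.
Qed.

Lemma LP_clC (Z : Mod) : clC C Z -> LP Z.
Proof.
move=> [P [g [ig [Y [s hs]]]]].
apply: (LP_inj (f:=lcomp s g)); last exact: ext_LP (@hExt Y).
by move=> x y /= e; apply: ig; apply: (split_inj hs).
Qed.

Lemma clC_ext1 (Z : Mod) : clC C Z -> Ext1_zero Z C.
Proof. by move=> h; apply: LP_ext; apply: LP_clC. Qed.

Lemma ext_prodC (Z : Mod) (Y : Type) : Ext1_zero Z C -> Ext1_zero Z (Y -> C).
Proof.
move=> hZ; case: (hs0) => ii [ps ker].
have hl1 : linear (fun c : Y -> C => (fun y => i0 (c y)) : Y -> I0).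
  by move=> k u v /=; apply/funext => y /=; rewrite linearP.
have hl2 : linear (fun c : Y -> I0 => (fun y => p0 (c y)) : Y -> I1).
  by move=> k u v /=; apply/funext => y /=; rewrite linearP.
apply: (ext_of_lift (j:=mkLin hl1) (q:=mkLin hl2)).
- move=> u v /= e; apply/funext => y; apply: ii.
  exact: (congr1 (fun h => h y) e).
- move=> v; split => /=.
    move=> h0.
    have hy y : exists c, i0 c = v y.
      by apply/ker; exact: (congr1 (fun h => h y) h0).
    case: (choice hy) => c hc; exists c; apply/funext => y /=; exact: hc.
  by move=> [c <-]; apply/funext => y /=; rewrite (ses_comp0 hs0).
- exact: prod_inj.
move=> phi.
have hy y : exists psi : {linear Z -> I0}, forall z, p0 (psi z) = phi z y.
  have hl : linear (fun z => phi z y) by move=> k u v /=; rewrite linearP.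
  exact: (ext_LP hZ (mkLin hl)).
case: (choice hy) => Ps hPs.
have hl : linear (fun z => (fun y => Ps y z) : Y -> I0).
  by move=> k u v /=; apply/funext => y /=; rewrite linearP.
by exists (mkLin hl) => z /=; apply/funext => y /=; rewrite hPs.
Qed.

Lemma ext_Prod (Z P : Mod) : Ext1_zero Z C -> inProd C P -> Ext1_zero Z P.
Proof.
move=> hZ [X [s [r hr]]].
exact: (ext_retract hr (ext_prodC (Y:=X) hZ)).
Qed.

Lemma Cp_Prod (P : Mod) : inProd C P -> clCperp C P.
Proof. by move=> hP X hX; apply: ext_Prod => //; apply: clC_ext1. Qed.

Lemma lemmaB (Z : Mod) : Ext1_zero Z C -> clC C Z.
Proof.
move=> hZ.
have hZ1 := ext_Prod hZ hC1.
have hF (z : Z) : exists F : {linear Z -> C0}, z != 0 -> pi1 (F z) != 0.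
  case: (eqVneq z 0) => [_ | nz]; first by exists (lzero Z C0).
  case: (hcog nz) => f hf.
  case: (lift_ext (i:=j1) (p:=pi1) f hZ1 hs1) => F hF.
  by exists F; rewrite hF.
case: (choice hF) => F hFF.
case: hC0 => X0 [s0 hs0'].
have si := split_inj hs0'.
have hl : linear (fun x : Z => (fun pr : (Z * X0)%type => s0 (F pr.1 x) pr.2) : (Z * X0)%type -> C).
  by move=> k u v /=; apply/funext => pr /=; rewrite !linearP.
exists ((Z * X0)%type -> C), (mkLin hl); split; last exact: inProd_prod.
move=> x x' e; apply/eqP; rewrite -subr_eq0; apply/negPn/negP => hn.
have := hFF _ hn.
have -> : F (x - x') (x - x') = 0.
  rewrite linearB; apply/eqP; rewrite subr_eq0; apply/eqP; apply: si.
  apply/funext => t; exact: (congr1 (fun h => h (x - x', t)) e).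
by rewrite linear0 eqxx.
Qed.

Lemma LP_ext_closed (A P B : Mod) (i : {linear A -> P}) (p : {linear P -> B}) :
  ses i p -> LP A -> LP B -> LP P.
Proof.
move=> hs hA hB phi; case: (hs) => ii [ps ker].
case: (hA (lcomp phi i)) => psiA hpsiA.
case: (@hI0 _ _ i psiA ii) => psi' hpsi'.
case: (descend (p:=p) (phi:=lsub phi (lcomp p0 psi')) ps _) => [x /ker [a <-] | ch0 hch0].
  by rewrite /= hpsi' hpsiA /= subrr.
case: (hB ch0) => ch hch.
exists (ladd psi' (lcomp ch p)) => x /=.
by rewrite linearD hch hch0 /= addrC subrK.
Qed.

Lemma clC_ext (A P B : Mod) (i : {linear A -> P}) (p : {linear P -> B}) :
  ses i p -> clC C A -> clC C B -> clC C P.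
Proof.
move=> hs hA hB; apply: lemmaB; apply: LP_ext.
exact: (LP_ext_closed hs (LP_clC hA) (LP_clC hB)).
Qed.

Lemma prod_of_perp (L : Mod) : clC C L -> clCperp C L -> inProd C L.
Proof.
move=> hL hp.
pose Y := {linear L -> C}.
have hl : linear (fun l : L => (fun f : Y => f l) : Y -> C).
  by move=> k u v /=; apply/funext => f /=; rewrite linearP.
pose io := mkLin hl.
have ioi : injective io.
  move=> x x' e; apply/eqP; rewrite -subr_eq0; apply/negPn/negP => hn.
  case: (clC_sep hL hn) => phi; rewrite linearB.
  by have := congr1 (fun h => h phi) e; rewrite /= => ->; rewrite subrr eqxx.
case: (coker_exists io) => Z [pi [pis pik]].
have hio l : pi (io l) = 0 by apply/pik; exists l.
have LPZ : LP Z.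
  move=> phi.
  case: (ext_LP (@hExt Y) (lcomp phi pi)) => psi hpsi.
  case: (hs0) => i0i [_ ker0].
  case: (factor_inj (a:=i0) (phi:=lcomp psi io) i0i _) => [l | w hw].
    by apply/ker0; rewrite /= hpsi /= hio linear0.
  have hev : linear (fun v : Y -> C => v w) by [].
  case: (descend (p:=pi) (phi:=lsub psi (lcomp i0 (mkLin hev))) pis _) => [v /pik [l <-] | ch hch].
    by rewrite /= hw subrr.
  exists ch => z; case: (pis z) => v <-.
  by rewrite hch /= linearB hpsi (ses_comp0 hs0) subr0.
have hZ : clC C Z by apply: lemmaB; apply: LP_ext.
have hses : ses io pi by split => //; split.
by exists Y, io; exact: (hp Z hZ _ _ _ hses).
Qed.

Lemma rej_Q (E T : Mod) (jT : {linear T -> E}) : injective jT ->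
  (forall t (phi : {linear E -> C}), phi (jT t) = 0) ->
  (forall x, (forall phi : {linear E -> C}, phi x = 0) -> exists t, jT t = x) -> clQ C T.
Proof.
move=> ij h1 h2 psi t.
case: (coker_exists jT) => Q' [pi [pis pik]].
have hQ : clC C Q'.
  apply: sep_clC => y hy; case: (pis y) => x hx.
  case: (pselect (exists phi : {linear E -> C}, phi x != 0)) => [[phi hphi] | hn].
    case: (descend (p:=pi) (phi:=phi) pis _) => [e /pik [t' <-] | ph hph].
      exact: h1.
    by exists ph; rewrite -hx hph.
  have : forall phi : {linear E -> C}, phi x = 0.
    move=> phi; apply/eqP; apply/negPn/negP => hp; apply: hn; by exists phi.
  move/h2 => [t' ht']; have : pi x = 0 by apply/pik; exists t'.
  by rewrite hx => y0; rewrite y0 eqxx in hy.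
have hses : ses jT pi by split => //; split.
case: (ext_extend (u:=jT) (c:=pi) psi (clC_ext1 hQ) hses) => rho hrho.
by rewrite -hrho h1.
Qed.

End Cot.


Section Help.
Variable R : pzRingType.
Local Notation Mod := (lmodType R^c).

Lemma inj_of0 (A B : Mod) (f : {linear A -> B}) : (forall x, f x = 0 -> x = 0) -> injective f.
Proof.
move=> h x y e; apply/eqP; rewrite -subr_eq0; apply/eqP; apply: h.
by rewrite linearB e subrr.
Qed.

Lemma triv_split (X Y : Mod) (f : {linear X -> Y}) : (forall x : X, x = 0) -> split_mono f.
Proof. by move=> h; exists (lzero Y X) => x; rewrite [RHS]h. Qed.

Lemma nsplit_nz (X Y : Mod) (f : {linear X -> Y}) : ~ split_mono f -> exists x : X, x != 0.
Proof.
move=> nf; case: (pselect (exists x : X, x != 0)) => // hn; exfalso; apply: nf.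
apply: triv_split => x; apply/eqP; apply/negPn/negP => hx; apply: hn; by exists x.
Qed.

Lemma nz_triv (X : Mod) : nonzero_mod X -> ~ (forall x : X, x = 0).
Proof. by move=> [x hx] h; rewrite (h x) eqxx in hx. Qed.

Lemma bij_lin_inv (X : Mod) (g : {linear X -> X}) : bijective g ->
  exists g' : {linear X -> X}, (forall x, g' (g x) = x) /\ (forall x, g (g' x) = x).
Proof.
move=> [gi h1 h2].
case: (factor_inj (a:=g) (phi:=lid X) (can_inj h1) _) => [x | g' hg'].
  by exists (gi x); rewrite h2.
exists g'; split => // x; apply: (can_inj h1); by rewrite hg'.
Qed.

Lemma local_inv (X Y : Mod) (f : {linear X -> Y}) : ~ split_mono f ->
  (forall g : {linear X -> X}, ~ split_mono g ->
     exists h : {linear Y -> X}, forall x, g x = h (f x)) ->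
  forall d : {linear Y -> X}, exists w : {linear X -> X},
    forall x, w (x + d (f x)) = x /\ w x + d (f (w x)) = x.
Proof.
move=> nf hlas d.
have claim0 (g : {linear X -> X}) (h : {linear Y -> X}) :
    (forall x, g x = h (f x)) -> split_mono g -> split_mono f.
  by move=> hg [r hr]; exists (lcomp r h) => x /=; rewrite -hg hr.
have claim1 (g1 g2 g : {linear X -> X}) : (forall x, g x = g1 x + g2 x) ->
    ~ split_mono g1 -> ~ split_mono g2 -> ~ split_mono g.
  move=> hg n1 n2 sg; case: (hlas _ n1) => h1 hh1; case: (hlas _ n2) => h2 hh2.
  apply: nf; apply: (claim0 g (ladd h1 h2)) => // x; by rewrite hg /= hh1 hh2.
have idsplit : split_mono (lid X) by exists (lid X).
have hl : linear (fun x => x + d (f x)).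
  by move=> k u v /=; rewrite (linearP f) (linearP d) scalerDr addrACA.
pose v := mkLin hl.
have nmdf : ~ split_mono (lcomp (lopp d) f).
  by move=> s; apply: nf; exact: (claim0 (lcomp (lopp d) f) (lopp d) (fun x => erefl) s).
have sv : split_mono v.
  case: (pselect (split_mono v)) => // nv; exfalso.
  apply: (claim1 v (lcomp (lopp d) f) (lid X) _ nv nmdf idsplit) => x /=.
  by rewrite addrK.
case: sv => r hr.
pose e := lcomp v r.
pose e' := lsub (lid X) e.
have he x : e (e x) = e x by rewrite /= hr.
case: (pselect (split_mono e)) => [[s hs] | ne].
  exists r => x; split; first exact: hr.
  have h0 : e (x - e x) = 0 by rewrite linearB he subrr.
  have := hs (x - e x); rewrite h0 linear0 => /esym /eqP; rewrite subr_eq0 => /eqP hx.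
  by rewrite [RHS]hx.
case: (pselect (split_mono e')) => [[s hs] | ne'].
  exfalso; apply: nf; apply: triv_split => x.
  have hy y : e y = 0.
    have : e' (e y) = 0 by change (e y - e (e y) = 0); rewrite he subrr.
    by move=> h; rewrite -(hs (e y)) h linear0.
  have : v x = 0 by rewrite -(hy (v x)); change (v x = v (r (v x))); rewrite hr.
  by move=> h; rewrite -(hr x) h linear0.
exfalso; apply: (claim1 e e' (lid X) _ ne ne' idsplit) => x /=.
by rewrite addrC subrK.
Qed.

End Help.


Section Thm.
Variable R : pzRingType.
Local Notation Mod := (lmodType R^c).
Variables (C I0 I1 : Mod) (i0 : {linear C -> I0}) (p0 : {linear I0 -> I1}).
Hypotheses (hs0 : ses i0 p0) (hI0 : injective_mod I0) (hI1 : injective_mod I1)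
  (hExt : forall X : Type, Ext1_zero (X -> C : Mod) C).
Variables (C1 C0 I : Mod) (j1 : {linear C1 -> C0}) (pi1 : {linear C0 -> I}).
Hypotheses (hs1 : ses j1 pi1) (hC1 : inProd C C1) (hC0 : inProd C C0) (hcog : cogenerator I).
Variables (L M N : Mod) (a : {linear L -> M}) (b : {linear M -> N}).
Hypothesis (hses : ses a b).

Let ai : injective a. Proof. by case: hses. Qed.
Let bs : forall n, exists m, b m = n. Proof. by case: hses => _ []. Qed.
Let bk : forall m, b m = 0 <-> exists l, a l = m. Proof. by case: hses => _ []. Qed.
Let ba0 l : b (a l) = 0. Proof. exact: (ses_comp0 hses l). Qed.

Let clC_ext' (A P B : Mod) (i : {linear A -> P}) (p : {linear P -> B}) :
  ses i p -> clC C A -> clC C B -> clC C P.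
Proof. exact: (clC_ext hs0 hI0 hI1 hExt hs1 hC1 hC0 hcog). Qed.
Let clC_ext1' (Z : Mod) : clC C Z -> Ext1_zero Z C.
Proof. exact: (clC_ext1 hs0 hI0 hI1 hExt). Qed.
Let Cp_Prod' (P : Mod) : inProd C P -> clCperp C P.
Proof. exact: (Cp_Prod hs0 hI0 hI1 hExt). Qed.
Let prod_of_perp' (P : Mod) : clC C P -> clCperp C P -> inProd C P.
Proof. exact: (prod_of_perp hs0 hI0 hExt hs1 hC1 hC0 hcog). Qed.
Let rej_Q' (E T : Mod) (jT : {linear T -> E}) : injective jT ->
  (forall t (phi : {linear E -> C}), phi (jT t) = 0) ->
  (forall x, (forall phi : {linear E -> C}, phi x = 0) -> exists t, jT t = x) -> clQ C T.
Proof. exact: (rej_Q hs0 hI0 hI1 hExt). Qed.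


Lemma dir1_ba : inProd C L /\ strong_left_almost_split (clC C) a ->
  clQ C N /\ almost_torsion_free C N /\ special_C_cover C b.
Proof.
move=> [hPL [clL [clM [nsa las]]]].
have uniq (Z : Mod) (g : {linear L -> Z}) (h1 h2 : {linear M -> Z}) : clC C Z ->
    ~ split_mono g -> (forall x, g x = h1 (a x)) -> (forall x, g x = h2 (a x)) ->
    forall m, h1 m = h2 m.
  move=> hZ ng e1 e2 m; case: (las Z g hZ ng) => h [_ hu].
  by rewrite (hu h1 e1) (hu h2 e2).
have [l0 hl0] := nsplit_nz nsa.
have n0 (Z : Mod) : ~ split_mono (lzero L Z).
  by move=> [r hr]; move: hl0; rewrite -(hr l0) /= linear0 eqxx.
have hQN : clQ C N.
  move=> f n; case: (bs n) => m <-.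
  have h1 : forall x, lzero L C x = lcomp f b (a x) by move=> x; rewrite /= ba0 linear0.
  have h2 : forall x, lzero L C x = lzero M C (a x) by [].
  exact: (uniq C (lzero L C) (lcomp f b) (lzero M C) (clC_C C) (n0 C) h1 h2 m).
have nzN : nonzero_mod N.
  case: (pselect (exists n : N, n != 0)) => // hn; exfalso; apply: nsa.
  have n0' (n : N) : n = 0 by apply/eqP; apply/negPn/negP => h; apply: hn; exists n.
  case: (factor_inj (a:=a) (phi:=lid M) ai _) => [m | r hr].
    by apply/bk; apply: n0'.
  by exists r => l; apply: ai; rewrite hr.
have c2 : forall (S : Mod) (i : {linear S -> N}), injective i ->
    ~ (forall t, exists s, i s = t) -> clC C S.
  move=> S i ii ni.
  case: (pullback b i) => P [p1 [p2 [hc hinj hpt huniv]]].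
  case: (huniv L a (lzero L S) _) => [l | aS haS].
    by rewrite ba0 /= linear0.
  have p1i : injective p1.
    by move=> x y e; apply: hinj => //; apply: ii; rewrite -!hc e.
  have clP : clC C P := clC_sub p1i clM.
  have hsS : ses aS p2.
    split; first by move=> x y e; apply: ai; rewrite -(haS x).1 -(haS y).1 e.
    split.
      by move=> s; case: (bs (i s)) => m hm; case: (hpt m s hm) => x [_ hx]; exists x.
    move=> x; split.
      move=> h2; have : b (p1 x) = 0 by rewrite hc h2 linear0.
      move/bk => [l hl]; exists l; apply: hinj; first by rewrite (haS l).1 hl.
      by rewrite (haS l).2 h2.
    by move=> [l <-]; rewrite (haS l).2.
  case: (pselect (split_mono aS)) => [[r hr] | nS].
    case: (split_sec hsS hr) => sg [hsg _].
    by apply: (clC_sub (f:=sg) _ clP) => x y e; rewrite -(hsg x) -(hsg y) e.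
  case: (las P aS clP nS) => h [hh _].
  have e1 : forall x, a x = lcomp p1 h (a x) by move=> x; rewrite /= -hh (haS x).1.
  have hid := uniq M a (lcomp p1 h) (lid M) clM nsa e1 (fun x => erefl).
  exfalso; apply: ni => n; case: (bs n) => m <-.
  by exists (p2 (h m)); rewrite -hc; have := hid m; rewrite /= => ->.
have main : forall (A B : Mod) (f : {linear A -> B}) (g : {linear B -> N}),
    ses f g -> clC C A -> clQ C B -> clQ C A.
  move=> A B f g hfg clA hQB.
  case: (hfg) => fi [gs gk].
  case: (pullback b g) => P [p1 [p2 [hc hinj hpt huniv]]].
  case: (huniv L a (lzero L B) _) => [l | a' ha']; first by rewrite ba0 /= linear0.
  case: (huniv A (lzero A M) f _) => [y | f' hf']; first by rewrite /= linear0 (ses_comp0 hfg).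
  have hsa : ses a' p2.
    split; first by move=> x y e; apply: ai; rewrite -(ha' x).1 -(ha' y).1 e.
    split.
      by move=> be; case: (bs (g be)) => m hm; case: (hpt m be hm) => x [_ hx]; exists x.
    move=> x; split.
      move=> h2; have : b (p1 x) = 0 by rewrite hc h2 linear0.
      move/bk => [l hl]; exists l; apply: hinj; first by rewrite (ha' l).1 hl.
      by rewrite (ha' l).2 h2.
    by move=> [l <-]; rewrite (ha' l).2.
  have hsf : ses f' p1.
    split; first by move=> x y e; apply: fi; rewrite -(hf' x).2 -(hf' y).2 e.
    split.
      by move=> m; case: (gs (b m)) => be hbe; case: (hpt m be (esym hbe)) => x [hx _]; exists x.
    move=> x; split.
      move=> h1; have : g (p2 x) = 0 by rewrite -hc h1 linear0.
      move/gk => [y hy]; exists y; apply: hinj; first by rewrite (hf' y).1 h1.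
      by rewrite (hf' y).2 hy.
    by move=> [y <-]; rewrite (hf' y).1.
  have clP : clC C P := clC_ext' hsf clA clM.
  case: (pselect (split_mono a')) => [[r hr] | na'].
    exfalso; case: (split_sec hsa hr) => sg [hsg _].
    have clB : clC C B.
      by apply: (clC_sub (f:=sg) _ clP) => x y e; rewrite -(hsg x) -(hsg y) e.
    have hB0 := QC_triv hQB clB.
    by apply: (nz_triv nzN) => n; case: (gs n) => be <-; rewrite (hB0 be) linear0.
  case: (las P a' clP na') => h [hh _].
  have e1 : forall x, a x = lcomp p1 h (a x) by move=> x; rewrite /= -hh (ha' x).1.
  have hid := uniq M a (lcomp p1 h) (lid M) clM nsa e1 (fun x => erefl).
  case: (descend (p:=b) (phi:=lcomp p2 h) bs _) => [m /bk [l <-] | sg hsg].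
    by rewrite /= -hh (ha' l).2.
  have gsg n : g (sg n) = n.
    by case: (bs n) => m <-; rewrite hsg /= -hc; have := hid m; rewrite /= => ->.
  case: (factor_inj (a:=f) (phi:=lsub (lid B) (lcomp sg g)) fi _) => [be | rho hrho].
    by apply/gk; rewrite /= linearB gsg subrr.
  move=> u y.
  have hy : rho (f y) = y.
    by apply: fi; rewrite hrho /= (ses_comp0 hfg) linear0 subr0.
  by rewrite -hy; exact: (hQB (lcomp u rho) (f y)).
have c3 : forall (A B : Mod) (f : {linear A -> B}) (g : {linear B -> N}),
    ses f g -> clQ C B -> clQ C A.
  move=> A B f g hfg hQB u x.
  case: (image_exists u) => U [jU [ub [ijU hub ubs _]]].
  case: (pushout ub hfg) => B' [f' [g' [eps [hs' heps _ hgen _]]]].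
  have epss : forall e', exists be, eps be = e'.
    move=> e'; case: (hgen e') => k [be ->]; case: (ubs k) => y <-.
    by exists (f y + be); rewrite linearD heps.
  have hQB' : clQ C B' := Q_quot epss hQB.
  have clU : clC C U := clC_sub ijU (clC_C C).
  have := main _ _ _ _ hs' clU hQB' jU (ub x).
  by rewrite hub.
split => //; split; first by split.
split => //; split => //; split; first by exists L, a; split => //; split => //; apply: Cp_Prod'.
move=> g hg.
case: (factor_inj (a:=a) (phi:=lsub g (lid M)) ai _) => [m | d hd].
  by apply/bk; rewrite /= linearB hg subrr.
have hlas : forall g0 : {linear L -> L}, ~ split_mono g0 ->
    exists h : {linear M -> L}, forall x, g0 x = h (a x).
  by move=> g0 ng0; case: (las L g0 clL ng0) => h [hh _]; exists h.
case: (local_inv nsa hlas d) => w hw.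
have hgm m : g m = m + a (d m) by rewrite hd /= addrC subrK.
exists (fun m' : M => m' - a (w (d m'))).
  by move=> m; rewrite hgm (linearD d) (hw (d m)).1 addrK.
move=> m'; rewrite hgm.
have ht : d (m' - a (w (d m'))) = w (d m').
  by rewrite linearB -{1}(hw (d m')).2 addrK.
by rewrite ht subrK.
Qed.


Lemma dir1_ab : clQ C N /\ almost_torsion_free C N /\ special_C_cover C b ->
  inProd C L /\ strong_left_almost_split (clC C) a.
Proof.
move=> [hQN [[nzN [c2 c3]] [_ [clM [[K [k [ki [kk hKp]]]] hmin]]]]].
have clL : clC C L := clC_sub ai clM.
have CpL : clCperp C L.
  case: (factor_inj (a:=k) (phi:=a) ki _) => [l | s hs].
    by apply/kk; rewrite ba0.
  case: (factor_inj (a:=a) (phi:=k) ai _) => [x | r hr].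
    by apply/bk; apply/kk; exists x.
  have hrs l : r (s l) = l by apply: ai; rewrite hr hs.
  by move=> X hX; exact: (ext_retract hrs (hKp X hX)).
have hPL : inProd C L := prod_of_perp' clL CpL.
split => //.
have nsa : ~ split_mono a.
  move=> [r hr]; case: (split_sec hses hr) => sg [hsg _].
  have clN : clC C N by apply: (clC_sub (f:=sg) _ clM) => x y e; rewrite -(hsg x) -(hsg y) e.
  exact: (nz_triv nzN (QC_triv hQN clN)).
split => //; split => //; split => //.
move=> Z g clZ ng.
have huniq : forall h h' : {linear M -> Z}, (forall x, g x = h (a x)) ->
    (forall x, g x = h' (a x)) -> forall y, h' y = h y.
  move=> h h' e e' y.
  case: (descend (p:=b) (phi:=lsub h' h) bs _) => [m /bk [l <-] | sg hsg].
    by rewrite /= -e -e' subrr.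
  apply/eqP; rewrite -subr_eq0; apply/eqP.
  by have := hsg y; rewrite /= => <-; exact: (QC_zero sg hQN clZ).
suff [h hh] : exists h : {linear M -> Z}, forall x, g x = h (a x).
  by exists h; split => // h' hh'; apply: huniq.
case: (pushout g hses) => E [z [e [eps [hsE heps hpe hgen _]]]].
case: (hsE) => zi [es ek].
have nclE : ~ clC C E.
  move=> clE.
  case: (lift_ext (i:=a) (p:=b) e (CpL E clE) hses) => tau htau.
  pose gam := lcomp tau eps.
  have hgam : automorphism gam.
    by apply: hmin => m; rewrite /= htau hpe.
  case: (bij_lin_inv hgam) => gi [hgi1 hgi2].
  case: (factor_inj (a:=a) (phi:=lcomp tau z) ai _) => [zz | mu hmu].
    by apply/bk; rewrite /= htau (ses_comp0 hsE).
  have hbgi y : b (gi y) = b y.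
    by rewrite -{2}(hgi2 y) /= htau hpe.
  case: (factor_inj (a:=a) (phi:=lcomp gi a) ai _) => [l | v' hv'].
    by apply/bk; rewrite /= hbgi ba0.
  apply: ng; exists (lcomp v' mu) => l; apply: ai.
  rewrite /= hv' /= hmu /= -heps.
  exact: (hgi1 (a l)).
pose PT := fun x : E => forall phi : {linear E -> C}, phi x = 0.
have hPT : submod PT.
  split; first by move=> phi; rewrite linear0.
  split; first by move=> x y hx hy phi; rewrite linearD hx hy addr0.
  by move=> kk' x hx phi; rewrite -[kk' *: x]addr0 linearP hx linear0 scaler0 addr0.
case: (sub_exists hPT) => T [jT [ijT hjT]].
have hT1 t (phi : {linear E -> C}) : phi (jT t) = 0.
  by move: (proj2 (hjT (jT t)) (ex_intro _ t erefl)) => /(_ phi).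
have QT : clQ C T := rej_Q' ijT hT1 (fun x hx => proj1 (hjT x) hx).
pose eT := lcomp e jT.
case: (image_exists eT) => U [jU [uT [ijU huT uTs _]]].
case: (pselect (forall n, exists y, jU y = n)) => [Usurj | Unot].
  have eTs n : exists t, eT t = n.
    by case: (Usurj n) => y <-; case: (uTs y) => t <-; exists t; rewrite huT.
  case: (kernel_exists eT) => K0 [jK [ijK hK]].
  have hsK : ses jK eT by split => //; split.
  have QK := c3 K0 T jK eT hsK QT.
  have clK : clC C K0.
    case: (factor_inj (a:=z) (phi:=lcomp jT jK) zi _) => [kk' | nu hnu].
      by apply/ek; exact: (proj2 (hK (jK kk')) (ex_intro _ kk' erefl)).
    apply: (clC_sub (f:=nu) _ clZ) => x y ex; apply: ijK; apply: ijT.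
    by have := congr1 z ex; rewrite !hnu; exact.
  have K00 := QC_triv QK clK.
  have eTi : forall t, eT t = 0 -> t = 0.
    by move=> t /hK [kk' <-]; rewrite (K00 kk') linear0.
  case: (descend (p:=eT) (phi:=lid T) eTs _) => [t /eTi -> // | psi hpsi].
  have hsec n : e (lcomp jT psi n) = n.
    by case: (eTs n) => t <-; rewrite /= hpsi.
  case: (sec_split hsE hsec) => r hr.
  by exists (lcomp r eps) => l; rewrite /= heps hr.
exfalso; apply: nclE.
have clU : clC C U := c2 U jU ijU Unot.
have QU : clQ C U := Q_quot uTs QT.
have U0 := QC_triv QU clU.
have eT0 t : e (jT t) = 0 by rewrite -[e (jT t)]/(eT t) -huT (U0 (uT t)) linear0.
case: (factor_inj (a:=z) (phi:=jT) zi _) => [t | nu hnu].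
  by apply/ek; apply: eT0.
have clT : clC C T.
  by apply: (clC_sub (f:=nu) _ clZ) => x y ex; apply: ijT; rewrite -!hnu ex.
have T0 := QC_triv QT clT.
apply: (sep_clC (C:=C)) => x hx.
case: (pselect (exists phi : {linear E -> C}, phi x != 0)) => // hn; exfalso.
have : PT x by move=> phi; apply/eqP; apply/negPn/negP => h; apply: hn; exists phi.
by move/hjT => [t ht]; move: hx; rewrite -ht (T0 t) linear0 eqxx.
Qed.


Lemma dir2_ba : inProd C M /\ strong_left_almost_split (clC C) b ->
  clC C L /\ almost_torsion C L /\ special_Cperp_envelope C a.
Proof.
move=> [hPM [clM [clN [nsb las]]]].
have clL : clC C L := clC_sub ai clM.
have nzL : nonzero_mod L.
  case: (pselect (exists l : L, l != 0)) => // hn; exfalso; apply: nsb.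
  have l0 (l : L) : l = 0 by apply/eqP; apply/negPn/negP => h; apply: hn; exists l.
  case: (descend (p:=b) (phi:=lid M) bs _) => [m /bk [l <-] | r hr].
    by rewrite (l0 l) linear0.
  by exists r.
split => //; split.
  split => //; split.
    move=> P q qs nq phi y.
    have [l0 [hl0 hql0]] : exists l0 : L, l0 != 0 /\ q l0 = 0.
      case: (pselect (exists l0 : L, l0 != 0 /\ q l0 = 0)) => // hn; exfalso; apply: nq.
      apply: inj_of0 => x hx; apply/eqP; apply/negPn/negP => h; apply: hn; by exists x.
    case: (ext_extend (u:=a) (c:=b) (lcomp phi q) (clC_ext1' clN) hses) => v hv.
    case: (pselect (split_mono v)) => [[r hr] | nv].
      have : a l0 = 0 by rewrite -(hr (a l0)) hv /= hql0 !linear0.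
      by move/(inj0 ai) => h0; rewrite h0 eqxx in hl0.
    case: (las C v (clC_C C) nv) => h [hh _].
    by case: (qs y) => l <-; rewrite -[phi (q l)]/(lcomp phi q l) -hv hh ba0 linear0.
  move=> A B f g hfg clA.
  case: (hfg) => fi [gs gk].
  case: (pushout a hfg) => P [i' [p' [eps [hsP heps hpe hgen huniv]]]].
  case: (huniv N b (lzero A N) _) => [l | pi [hpi1 hpi2]].
    by rewrite ba0.
  have epsi : injective eps.
    apply: inj_of0 => x hx.
    have : g x = 0 by rewrite -hpe hx linear0.
    move/gk => [l hl]; move: hx; rewrite -hl heps => /(inj0 (proj1 hsP)) /(inj0 ai) ->.
    by rewrite linear0.
  have hsE : ses eps pi.
    split => //; split.
      by move=> n; case: (bs n) => m <-; exists (i' m); rewrite hpi1.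
    move=> x; split.
      case: (hgen x) => m [y ->]; rewrite linearD hpi1 hpi2 /= addr0 => /bk [l hl].
      by exists (f l + y); rewrite linearD heps hl.
    by move=> [y <-]; rewrite hpi2.
  have clP : clC C P := clC_ext' hsE clA clN.
  case: (pselect (split_mono i')) => [[r hr] | ni].
    case: (split_sec hsP hr) => sg [hsg _].
    by apply: (clC_sub (f:=sg) _ clP) => x y e; rewrite -(hsg x) -(hsg y) e.
  case: (las P i' clP ni) => h [hh _].
  exfalso; apply: (nz_triv nzL) => l.
  apply: (inj0 ai); apply: (inj0 (proj1 hsP)).
  by rewrite hh ba0 linear0.
split; first exact: ai.
split; first exact: Cp_Prod'.
split; first by exists N, b; split; [exact: bs | split; [exact: bk | exact: clN]].
move=> g hg.
case: (descend (p:=b) (phi:=lsub g (lid M)) bs _) => [m /bk [l <-] | d hd].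
  by rewrite /= hg subrr.
have hlas : forall g0 : {linear M -> M}, ~ split_mono g0 ->
    exists h : {linear N -> M}, forall x, g0 x = h (b x).
  by move=> g0 ng0; case: (las M g0 clM ng0) => h [hh _]; exists h.
case: (local_inv nsb hlas d) => w hw.
have hgm m : g m = m + d (b m) by rewrite hd /= addrC subrK.
exists w => m; first by rewrite hgm (hw m).1.
by rewrite hgm (hw m).2.
Qed.

Lemma dir2_ab : clC C L /\ almost_torsion C L /\ special_Cperp_envelope C a ->
  inProd C M /\ strong_left_almost_split (clC C) b.
Proof.
move=> [clL [[nzL [c2 c3]] [_ [CpM [[P [c [cs [ck clP]]]] hmin]]]]].
case: (descend (p:=b) (phi:=c) bs _) => [m /bk [l <-] | th hth].
  by apply/ck; exists l.
have thi : injective th.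
  by apply: inj_of0 => n; case: (bs n) => m <-; rewrite hth => /ck [l <-]; rewrite ba0.
have clN : clC C N := clC_sub thi clP.
have clM : clC C M := clC_ext' hses clL clN.
split; first exact: prod_of_perp'.
have nsb : ~ split_mono b.
  move=> [r hr]; apply: (nz_triv nzL) => l; apply: (inj0 ai).
  by rewrite -(hr (a l)) ba0 linear0.
split => //; split => //; split => //.
move=> Z g clZ ng.
pose u := lcomp g a.
have hu0 : forall l, u l = 0.
  case: (image_exists u) => U [jU [ub [ijU hub ubs _]]].
  case: (pselect (injective u)) => [ui | nui].
    case: (coker_exists u) => Q' [c' [c's c'k]].
    have hs' : ses u c' by split => //; split.
    have clQ' := c3 Z Q' u c' hs' clZ.
    case: (ext_extend (u:=u) (c:=c') a (CpM Q' clQ') hs') => rho hrho.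
    pose gam := lcomp rho g.
    have hgam : automorphism gam by apply: hmin => l; exact: (hrho l).
    case: (bij_lin_inv hgam) => gi [hgi1 _].
    by exfalso; apply: ng; exists (lcomp gi rho) => m; exact: (hgi1 m).
  have nub : ~ injective ub.
    by move=> ubi; apply: nui => x y e; apply: ubi; apply: ijU; rewrite !hub.
  have QU := c2 U ub ubs nub.
  have clU : clC C U := clC_sub ijU clZ.
  by move=> l; rewrite -hub (QC_triv QU clU (ub l)) linear0.
case: (descend (p:=b) (phi:=g) bs _) => [m /bk [l <-] | h hh].
  exact: hu0.
exists h; split => [x | h' hh' y]; first by rewrite hh.
by case: (bs y) => m <-; rewrite hh -hh'.
Qed.

End Thm.


Theorem theorem4p2 (R : pzRingType) (C : lmodType R^c) (hC : cotilting C)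
  (L M N : lmodType R^c) (a : {linear L -> M}) (b : {linear M -> N})
  (hses : ses a b) :
  ((clQ C N /\ almost_torsion_free C N /\ special_C_cover C b) <->
     (inProd C L /\ strong_left_almost_split (clC C) a)) /\
  ((clC C L /\ almost_torsion C L /\ special_Cperp_envelope C a) <->
     (inProd C M /\ strong_left_almost_split (clC C) b)).
Proof.
case: hC => [[I0 [I1 [i0 [p0 [hs0 [hI0 hI1]]]]]] [hExt [C1 [C0 [I [j1 [pi1 [hs1 [hC1 [hC0 [_ hcog]]]]]]]]]]].
split; split.
- exact: (dir1_ab hs0 hI0 hI1 hExt hs1 hC1 hC0 hcog hses).
- exact: (dir1_ba hs0 hI0 hI1 hExt hs1 hC1 hC0 hcog hses).
- exact: (dir2_ab hs0 hI0 hI1 hExt hs1 hC1 hC0 hcog hses).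
- exact: (dir2_ba hs0 hI0 hI1 hExt hs1 hC1 hC0 hcog hses).
Qed.
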